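(* Let $\mathcal{F}$ be a holomorphic foliation by curves defined near a point $p$ of $\mathbb{C}^n$ by the polynomial vector field $X_p=\sum_{j=1}^{n}P_j(z)\frac{\partial}{\partial z_j}$, where, in these coordinates, $W=\{z_1=\cdots=z_d=0\}$ and $m_i=m_W(P_i)$. Then, by a linear change of coordinates $w=Az$ preserving $W$, $\mathcal{F}$ may be described by a polynomial vector field $Y_p=\sum_{j=1}^{n}Q_j(w)\frac{\partial}{\partial w_j}$ with $$m_W(Q_j)=\begin{cases} m'_W(\mathcal F), & j=1,\ldots,d,\\ m_W(\mathcal F), & j=d+1,\ldots,n,\end{cases}$$ where $m'_W(\mathcal{F})=\min\{m_1,\ldots,m_d\}$.
   Context: For a function $P$ written as $P(z)=\sum_{|a|=q}z_1^{a_1}\cdots z_d^{a_d}P_a(z)$, $a=(a_1,\ldots,a_d)\in\mathbb Z_{\ge0}^d$, with at least one $P_a$ not vanishing identically on $\{z_1=\cdots=z_d=0\}$, the multiplicity of $P$ along $W$ is $m_W(P)=q$. The multiplicity of $\mathcal F$ along $W$ is $m_W(\mathcal F)=\min\{m_1,\ldots,m_n\}$. *)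

(* Defs.v *)
From mathcomp Require Import all_boot all_algebra.
From mathcomp Require Import complex.
From mathcomp Require Import mpoly.
From mathcomp Require Import Rstruct.
Set Implicit Arguments. Unset Strict Implicit. Unset Printing Implicit Defensive.
Import GRing.Theory Num.Theory.
Local Open Scope ring_scope.

Definition C : numClosedFieldType := complex Rdefinitions.R.

(* Degree of the monomial z^m in the first d variables z_1,...,z_d
   (Rocq indices 0,...,d-1). *)
Definition Wdeg (n d : nat) (m : 'X_{1.. n}) : nat :=
  (\sum_(i < n | (i < d)%N) m i)%N.

(* m_W(P) = q, with W = {z_1 = ... = z_d = 0}: P = sum_{|a|=q} z'^a P_a
   (z' = (z_1..z_d)) with some P_a not vanishing identically on W; i.e.
   every monomial of P has degree >= q in z_1..z_d and some monomial has
   degree exactly q in z_1..z_d.  (Undefined for P = 0.) *)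
Definition multW (n d : nat) (P : {mpoly C[n]}) (q : nat) : Prop :=
  (forall m, m \in msupp P -> (q <= Wdeg d m)%N) /\
  (exists2 m, m \in msupp P & Wdeg d m = q).

Definition is_min (S : nat -> Prop) (k : nat) : Prop :=
  S k /\ forall j, S j -> (k <= j)%N.

Definition inW (n d : nat) (z : 'cV[C]_n) : Prop :=
  forall i : 'I_n, (i < d)%N -> z i 0 = 0.

Definition preservesW (n d : nat) (A : 'M[C]_n) : Prop :=
  forall z : 'cV[C]_n, inW d z -> inW d (A *m z).

(* Main.v *)
Require Import Defs.
From mathcomp Require Import all_boot all_algebra.
From mathcomp Require Import complex.
From mathcomp Require Import mpoly.
From mathcomp Require Import Rstruct.
Set Implicit Arguments. Unset Strict Implicit. Unset Printing Implicit Defensive.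
Import GRing.Theory Num.Theory.
Local Open Scope ring_scope.

Definition ordge (n d q : nat) (p : {mpoly C[n]}) : Prop :=
  forall m, m \in msupp p -> (q <= Wdeg d m)%N.

Lemma WdegD n d (m1 m2 : 'X_{1..n}) : Wdeg d (m1 + m2)%MM = (Wdeg d m1 + Wdeg d m2)%N.
Proof. by rewrite /Wdeg -big_split /=; apply: eq_bigr => i _; rewrite mnmDE. Qed.

Lemma WdegU n d (k : 'I_n) : Wdeg d U_(k)%MM = (k < d)%N.
Proof.
rewrite /Wdeg big_mkcond (bigD1 k) //= big1 ?addn0.
  by rewrite mnm1E eqxx; case: (k < d)%N.
by move=> i /negbTE ik; rewrite mnm1E eq_sym ik; case: (i < d)%N.
Qed.

Lemma ordge_weak n d a b (p : {mpoly C[n]}) : (b <= a)%N -> ordge d a p -> ordge d b p.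
Proof. by move=> ba h m /h; apply: leq_trans. Qed.

Lemma ordge0 n d q : ordge d q (0 : {mpoly C[n]}).
Proof. by move=> m; rewrite msupp0. Qed.

Lemma ordge_0 n d (p : {mpoly C[n]}) : ordge d 0 p.
Proof. by []. Qed.

Lemma ordgeD n d q (p1 p2 : {mpoly C[n]}) : ordge d q p1 -> ordge d q p2 -> ordge d q (p1 + p2).
Proof. by move=> h1 h2 m /msuppD_le; rewrite mem_cat => /orP[/h1|/h2]. Qed.

Lemma ordgeZ n d q c (p : {mpoly C[n]}) : ordge d q p -> ordge d q (c *: p).
Proof. by move=> h m /msuppZ_le /h. Qed.

Lemma ordge_sum n d q (I : Type) (r : seq I) (Pr : pred I) (F : I -> {mpoly C[n]}) :
  (forall i, Pr i -> ordge d q (F i)) -> ordge d q (\sum_(i <- r | Pr i) F i).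
Proof. move=> h; apply: big_ind => //; [exact: ordge0 | exact: ordgeD]. Qed.

Lemma ordgeM n d a b (p1 p2 : {mpoly C[n]}) : ordge d a p1 -> ordge d b p2 -> ordge d (a + b) (p1 * p2).
Proof.
move=> h1 h2 m /msuppM_le /allpairsP [[m1 m2] /= [i1 i2 ->]].
by rewrite WdegD leq_add // ?h1 ?h2.
Qed.

Lemma ordgeX n d a k (p : {mpoly C[n]}) : ordge d a p -> ordge d (a * k) (p ^+ k).
Proof.
move=> h; elim: k => [|k ih]; first by rewrite muln0.
by rewrite exprS mulnS; apply: ordgeM.
Qed.

Lemma ordge_prod n d (a : 'I_n -> nat) (F : 'I_n -> {mpoly C[n]}) :
  (forall i, ordge d (a i) (F i)) -> ordge d (\sum_(i < n) a i)%N (\prod_(i < n) F i).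
Proof.
move=> h.
apply: (big_ind2 (fun p q => ordge d q p)) => //.
by move=> ? ? ? ? ? ?; apply: ordgeM.
Qed.

Lemma ordge_comp n d q (p : {mpoly C[n]}) (t : n.-tuple {mpoly C[n]}) :
  (forall i : 'I_n, ordge d (i < d)%N (tnth t i)) -> ordge d q p -> ordge d q (p \mPo t).
Proof.
move=> ht hp; rewrite comp_mpolyE big_seq; apply: ordge_sum => m /hp hm.
apply: ordgeZ; apply: ordge_weak hm _.
have -> : Wdeg d m = (\sum_(i < n) (i < d)%N * m i)%N.
  rewrite /Wdeg big_mkcond /=; apply: eq_bigr => i _; by case: (i < d)%N; rewrite ?mul1n ?mul0n.
by apply: ordge_prod => i; apply: ordgeX.
Qed.

Definition blockW (n d : nat) (M : 'M[C]_n) : Prop :=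
  forall j k : 'I_n, (j < d)%N -> (d <= k)%N -> M j k = 0.

Definition lin (n : nat) (M : 'M[C]_n) : n.-tuple {mpoly C[n]} :=
  [tuple \sum_(k < n) M i k *: 'X_k | i < n].

Lemma ordge_lin n d (M : 'M[C]_n) : blockW d M ->
  forall i : 'I_n, ordge d (i < d)%N (tnth (lin M) i).
Proof.
move=> hM i; rewrite tnth_mktuple; apply: ordge_sum => k _.
case: (ltnP i d) => [id|]; last by move=> _; apply: ordge_0.
case: (ltnP k d) => [kd|dk]; last by rewrite hM // scale0r; apply: ordge0.
apply: ordgeZ => m; rewrite msuppX inE => /eqP ->.
by rewrite WdegU kd.
Qed.

Lemma comp_assoc n (p : {mpoly C[n]}) (t s : n.-tuple {mpoly C[n]}) :
  (p \mPo t) \mPo s = p \mPo [tuple (tnth t i \mPo s) | i < n].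
Proof.
have -> : p \mPo t = \sum_(m <- msupp p) (p@_m *: ('X_[m] \mPo t)) by exact: comp_mpolyEX.
have -> : p \mPo [tuple (tnth t i \mPo s) | i < n] = \sum_(m <- msupp p) (p@_m *: ('X_[m] \mPo [tuple (tnth t i \mPo s) | i < n])) by exact: comp_mpolyEX.
rewrite raddf_sum /=.
apply: eq_bigr => m _. rewrite (comp_mpolyZ (p@_m) ('X_[m] \mPo t) s). apply: f_equal.
rewrite !comp_mpolyX rmorph_prod /=; apply: eq_bigr => i _.
by rewrite rmorphXn tnth_mktuple.
Qed.

Lemma lin_comp n (L A : 'M[C]_n) : L *m A = 1%:M ->
  [tuple (tnth (lin L) i \mPo lin A) | i < n] = [tuple 'X_i | i < n].
Proof.
move=> LA; apply: eq_from_tnth => i; rewrite !tnth_mktuple.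
rewrite raddf_sum /=.
under eq_bigr do rewrite comp_mpolyZ comp_mpolyXU -tnth_nth tnth_mktuple scaler_sumr.
rewrite exchange_big /=.
under eq_bigr do under eq_bigr do rewrite scalerA.
under eq_bigr do rewrite -scaler_suml.
have E j : \sum_(k < n) L i k * A k j = (i == j)%:R.
  by have := congr1 (fun M : 'M[C]_n => M i j) LA; rewrite !mxE.
under eq_bigr do rewrite E.
rewrite (bigD1 i) //= big1 ?addr0 ?eqxx ?scale1r //.
by move=> j /negbTE; rewrite eq_sym => ->; rewrite scale0r.
Qed.

Lemma comp_inv n (p : {mpoly C[n]}) (L A : 'M[C]_n) : L *m A = 1%:M ->
  (p \mPo lin L) \mPo lin A = p.
Proof. by move=> LA; rewrite comp_assoc lin_comp // comp_mpoly_id. Qed.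

Lemma multW_ordge n d (p : {mpoly C[n]}) q :
  multW d p q <-> ordge d q p /\ ~ ordge d q.+1 p.
Proof.
split.
  case=> h1 [m mp mq]; split => // h; have := h m mp; by rewrite mq ltnn.
case=> h1 h2; split => //.
case: (boolP (has (fun m => Wdeg d m <= q)%N (msupp p))).
  case/hasP => m mp mle; exists m => //; apply/eqP; rewrite eqn_leq mle h1 //.
move/hasPn => hn; exfalso; apply: h2 => m /hn; by rewrite -ltnNge.
Qed.

Lemma multW_comp n d (p : {mpoly C[n]}) q (L A : 'M[C]_n) :
  blockW d L -> blockW d A -> L *m A = 1%:M ->
  multW d p q -> multW d (p \mPo lin L) q.
Proof.
move=> bL bA LA /multW_ordge [h1 h2]; apply/multW_ordge; split.
  by apply: ordge_comp => //; apply: ordge_lin.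
move=> h; apply: h2; rewrite -(comp_inv p LA).
by apply: ordge_comp => //; apply: ordge_lin.
Qed.

Lemma meval_lin n (M : 'M[C]_n) (v : 'I_n -> C) (i : 'I_n) :
  (tnth (lin M) i).@[v] = \sum_(k < n) M i k * v k.
Proof.
rewrite tnth_mktuple raddf_sum /=; apply: eq_bigr => k _.
by rewrite mevalZ mevalXU.
Qed.

Lemma blockW_pres n d (A : 'M[C]_n) : blockW d A -> preservesW d A.
Proof.
move=> bA z hz j jd; rewrite mxE big1 // => k _.
case: (ltnP k d) => kd; first by rewrite hz // mulr0.
by rewrite bA // mul0r.
Qed.

Lemma blockW1 n d : blockW d (1%:M : 'M[C]_n).
Proof.
move=> j k jd dk; rewrite mxE; case: eqP => // ejk.
by move: dk; rewrite -ejk leqNgt jd.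
Qed.

Lemma blockWD n d (M1 M2 : 'M[C]_n) : blockW d M1 -> blockW d M2 -> blockW d (M1 + M2).
Proof. by move=> h1 h2 j k jd dk; rewrite mxE h1 // h2 // addr0. Qed.

Lemma blockWB n d (M1 M2 : 'M[C]_n) : blockW d M1 -> blockW d M2 -> blockW d (M1 - M2).
Proof. by move=> h1 h2 j k jd dk; rewrite !mxE h1 // h2 // subr0. Qed.

Theorem lemma2p1 (n d : nat) (hd : (0 < d <= n)%N)
  (P : 'I_n -> {mpoly C[n]}) (mi : 'I_n -> nat)
  (hmi : forall i, multW d (P i) (mi i))
  (mF mF' : nat)
  (hmF : is_min (fun k => exists i : 'I_n, k = mi i) mF)
  (hmF' : is_min (fun k => exists2 i : 'I_n, (i < d)%N & k = mi i) mF') :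
  exists (A : 'M[C]_n) (Q : 'I_n -> {mpoly C[n]}),
    [/\ A \in unitmx, preservesW d A,
        (forall (z : 'cV[C]_n) (j : 'I_n),
            (Q j).@[fun i => (A *m z) i 0]
            = \sum_(k < n) A j k * (P k).@[fun i => z i 0])
      & forall j : 'I_n, multW d (Q j) (if (j < d)%N then mF' else mF)].
Proof.
case: hmF => [[i1' e1] hmin]; case: hmF' => [[i0 i0d e0] hmin'].
have leF : (mF <= mF')%N by apply: hmin; exists i0.
pose i1 := if mF' == mF then i0 else i1'.
have e1i : mi i1 = mF by rewrite /i1; case: eqP => [<-|_]; [rewrite e0 | rewrite e1].
have i1d : (i1 < d)%N -> i1 = i0.
  rewrite /i1; case: eqP => // ne id; exfalso; apply: ne; apply/eqP.
  rewrite eqn_leq leF andbT e1; apply: hmin'; by exists i1'.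
pose t (j : 'I_n) := if (j < d)%N then i0 else i1.
have ttj j : t (t j) = t j.
  rewrite /t; case: (ltnP j d) => _; first by rewrite i0d.
  by case: (ltnP i1 d) => [/i1d ->|].
pose tg (j : 'I_n) := if (j < d)%N then mF' else mF.
have mit j : mi (t j) = tg j by rewrite /t /tg; case: ltnP.
have tgle j : (tg j <= mi j)%N.
  rewrite /tg; case: ltnP => jd; first by apply: hmin'; exists j.
  by apply: hmin; exists j.
case: (hmi i0) => _ [w0 w0P w0D]; case: (hmi i1) => _ [w1 w1P w1D].
pose mm (j : 'I_n) := if (j < d)%N then w0 else w1.
have mmP j : mm j \in msupp (P (t j)) by rewrite /mm /t; case: ltnP.
have mmD j : Wdeg d (mm j) = tg j by rewrite -mit /mm /t; case: ltnP.
pose c (j : 'I_n) := (1 - (P j)@_(mm j)) / (P (t j))@_(mm j).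
pose N : 'M[C]_n := \matrix_(j, k) if (k == t j) && (j != t j) then c j else 0.
have NN : N *m N = 0.
  apply/matrixP => j k; rewrite !mxE big1 // => l _; rewrite !mxE.
  case: eqP => [->|]; last by rewrite mul0r.
  by rewrite ttj eqxx andbF mulr0.
have bN : blockW d N.
  move=> j k jd dk; rewrite mxE /t jd; case: eqP => // ek; exfalso.
  by move: dk; rewrite ek leqNgt i0d.
pose A : 'M[C]_n := 1%:M + N.
pose Ai : 'M[C]_n := 1%:M - N.
have AiA : Ai *m A = 1%:M.
  by rewrite /Ai /A mulmxDr !mulmxBl !mul1mx mulmx1 NN subr0 subrK.
have bA : blockW d A.
  exact: blockWD (@blockW1 n d) bN.
have bAi : blockW d Ai.
  exact: blockWB (@blockW1 n d) bN.
pose R (j : 'I_n) := \sum_(k < n) A j k *: P k.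
exists A, (fun j => R j \mPo lin Ai); split.
- by case: (mulmx1_unit AiA).
- exact: blockW_pres.
- move=> z j; rewrite comp_mpoly_meval.
  rewrite (@meval_eq _ _ _ (fun i => z i 0)); last first.
    move=> i; rewrite meval_lin.
    have := congr1 (fun M : 'cV[C]_n => M i 0) (mulmxA Ai A z).
    rewrite AiA mul1mx /= => <-; rewrite mxE; apply: eq_bigr => k _.
    by rewrite mxE.
  by rewrite /R raddf_sum /=; apply: eq_bigr => k _; rewrite mevalZ.
move=> j; apply: (multW_comp bAi bA AiA); rewrite -/(tg j).
have Ajk k : A j k = (j == k)%:R + N j k by rewrite /A mxE [in LHS]mxE.
have Njk k : N j k = if (k == t j) && (j != t j) then c j else 0 by rewrite mxE.
split.
  apply: ordge_sum => k _.
  case: (eqVneq (A j k) 0) => [->|nz]; first by rewrite scale0r; apply: ordge0.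
  apply: ordgeZ.
  have : (k == j) || (k == t j).
    move: nz; rewrite Ajk Njk; case: (eqVneq k j) => [->|kj]; first by move=> _; apply/orP; left; apply/eqP.
    rewrite add0r; case: (k == t j) => //=.
    by move=> /negP[].
  case/orP => /eqP ->; first exact: ordge_weak (tgle j) (hmi j).1.
  by rewrite -mit; exact: (hmi (t j)).1.
exists (mm j); last exact: mmD.
have coef : (R j)@_(mm j) = \sum_(k < n) A j k * (P k)@_(mm j).
  by rewrite /R raddf_sum /=; apply: eq_bigr => k _; rewrite mcoeffZ.
have S1 : \sum_(k < n) (j == k)%:R * (P k)@_(mm j) = (P j)@_(mm j).
  rewrite (bigD1 j) //= eqxx mul1r big1 ?addr0 // => k /negbTE.
  by rewrite eq_sym => ->; rewrite mul0r.
have S2 : \sum_(k < n) N j k * (P k)@_(mm j) =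
    (if j != t j then c j else 0) * (P (t j))@_(mm j).
  rewrite (bigD1 (t j)) //= Njk eqxx /= big1 ?addr0 // => k /negbTE kt.
  by rewrite Njk kt mul0r.
have : (R j)@_(mm j) = (P j)@_(mm j) + (if j != t j then c j else 0) * (P (t j))@_(mm j).
  rewrite coef -S1 -S2 -big_split /=; apply: eq_bigr => k _.
  by rewrite Ajk mulrDl.
move=> E; rewrite -[_ \in _]negbK -mcoeff_eq0 E.
have nz : (P (t j))@_(mm j) != 0 by rewrite mcoeff_eq0 negbK mmP.
case: (eqVneq j (t j)) => [ejt|njt].
  rewrite /= mul0r addr0.
  by move: nz; rewrite -ejt.
rewrite /= /c mulfVK // addrC subrK; exact: oner_neq0.
Qed.
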